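(* Let $X=\{x_0,\ldots,x_m\}$ and $X'=\{x'_0,\ldots,x'_q\}$. The multiplicative dynamic feedback product $c\,\check{@}\,d:=c\,\tilde\circ\,\delta_{(d^{\sqcup\!\sqcup-1}\circ c)^{\circ-1}}$ is a right group action of the group $(\mathbb{R}^m_{pi}\langle\langle X'\rangle\rangle,\sqcup\!\sqcup,\mathbb 1)$ on the set $\mathbb{R}^q\langle\langle X\rangle\rangle$; that is, for all $c\in\mathbb{R}^q\langle\langle X\rangle\rangle$ and all purely improper $d_1,d_2\in\mathbb{R}^m\langle\langle X'\rangle\rangle$, $c\,\check{@}\,\mathbb 1=c$ and $(c\,\check{@}\,d_1)\,\check{@}\,d_2=c\,\check{@}\,(d_1\sqcup\!\sqcup d_2)$.
   Context: $\mathbb{R}^\ell\langle\langle X\rangle\rangle$: formal power series in noncommuting letters with coefficients in $\mathbb{R}^\ell$; componentwise products; $\mathbb{R}^m_{pi}\langle\langle X'\rangle\rangle$ is the set of purely improper series (every component has nonzero constant term); $\mathbb 1=[1\cdots1]^t$ viewed as a constant series. Shuffle product $\sqcup\!\sqcup$: bilinear, $(x_i\eta)\sqcup\!\sqcup(x_j\xi)=x_i(\eta\sqcup\!\sqcup x_j\xi)+x_j(x_i\eta\sqcup\!\sqcup\xi)$, $\eta\sqcup\!\sqcup\emptyset=\emptyset\sqcup\!\sqcup\eta=\eta$; $d^{\sqcup\!\sqcup-1}$ the componentwise shuffle inverse. Composition product: $c\circ e=\sum_{\eta\in X'^\ast}(c,\eta)\psi_e(\eta)(\mathbf 1)$ for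 $c\in\mathbb{R}^k\langle\langle X'\rangle\rangle$, $e\in\mathbb{R}^q\langle\langle X\rangle\rangle$, with $\mathbf 1=1\emptyset$, $\psi_e(x'_i)(w)=x_0(e_i\sqcup\!\sqcup w)$, $e_0:=\mathbf 1$, multiplicative (concatenation to composition). Multiplicative mixed composition: $c\,\tilde\circ\,\delta_g=\sum_{\eta\in X^\ast}(c,\eta)\bar\phi_g(\eta)(\mathbf 1)$ with $\bar\phi_g(x_0)(w)=x_0w$, $\bar\phi_g(x_i)(w)=x_i(g_i\sqcup\!\sqcup w)$ ($i\ge1$), multiplicative. For purely improper $g\in\mathbb{R}^m\langle\langle X\rangle\rangle$, $g^{\circ-1}$ is the unique $h\in\mathbb{R}^m\langle\langle X\rangle\rangle$ with $h=g^{\sqcup\!\sqcup-1}\,\tilde\circ\,\delta_h$. *)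

(* Defs.v *)
From HB Require Import structures.
From mathcomp Require Import all_boot all_order all_algebra.
From mathcomp Require Import reals.
From Stdlib Require Import ClassicalEpsilon.
Set Implicit Arguments. Unset Strict Implicit. Unset Printing Implicit Defensive.
Import Order.TTheory GRing.Theory Num.Theory.
Local Open Scope ring_scope.

Section Series.
Variable R : realType.

(* scalar formal power series over a finite alphabet A: word -> coefficient *)
Definition ser (A : finType) := seq A -> R.
Definition vser (l : nat) (A : finType) := 'I_l -> ser A.

(* shuffle of two words, as a list (multiset) of words *)
Fixpoint shw (A : Type) (u v : seq A) {struct u} : seq (seq A) :=
  match u with
  | [::] => [:: v]
  | a :: u' =>
      let fix shw_in (v : seq A) : seq (seq A) :=
        match v with
        | [::] => [:: u]
        | b :: v' => map (cons a) (shw u' v) ++ map (cons b) (shw_in v')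
        end in
      shw_in v
  end.

Definition one (A : finType) : ser A := fun nu => if nu is [::] then 1 else 0.

(* bilinear extension of the word shuffle; words u,v with u ⧢ v ∋ nu have
   |u| + |v| = |nu|, so the sum is finite *)
Definition shuffle (A : finType) (c d : ser A) : ser A := fun nu =>
  \sum_(k < (size nu).+1) \sum_(u : k.-tuple A) \sum_(v : (size nu - k).-tuple A)
     c u * d v * (count_mem nu (shw u v))%:R.

Definition lcat (A : finType) (a : A) (s : ser A) : ser A := fun nu =>
  if nu is b :: nu' then (if b == a then s nu' else 0) else 0.

Definition shinv (A : finType) (d : ser A) : ser A :=
  epsilon (inhabits (fun _ => 0)) (fun e => shuffle d e = @one A).

(* sum_{eta} (c,eta) Phi(eta)(1), with Phi extended multiplicatively
   (concatenation to composition).  Every letter action used below prefixes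
   one letter, so Phi(eta)(1) vanishes on words shorter than eta, and the
   coefficient at nu only involves words eta with |eta| <= |nu|. *)
Definition wsum (A B : finType) (c : ser A) (Phi : A -> ser B -> ser B) : ser B :=
  fun nu => \sum_(k < (size nu).+1) \sum_(eta : k.-tuple A)
     c eta * foldr Phi (@one B) eta nu.

Definition vone (l : nat) (A : finType) : vser l A := fun _ => @one A.
Definition vshuffle (l : nat) (A : finType) (c d : vser l A) : vser l A :=
  fun i => shuffle (c i) (d i).
Definition vshinv (l : nat) (A : finType) (d : vser l A) : vser l A :=
  fun i => shinv (d i).
Definition purely_improper (l : nat) (A : finType) (c : vser l A) : Prop :=
  forall i, c i [::] != 0.

(* composition product c ∘ e, c in R^k<<X'>>, X' = {x'_0..x'_q},
   e in R^q<<X>>, X = {x_0..x_m};  psi_e(x'_i)(w) = x_0 (e_i ⧢ w), e_0 = 1 *)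
Definition psi (q m : nat) (e : vser q 'I_m.+1) (a : 'I_q.+1) (w : ser 'I_m.+1)
  : ser 'I_m.+1 :=
  lcat ord0 (shuffle (match unlift ord0 a with None => @one _ | Some i => e i end) w).
Definition comp (k q m : nat) (c : vser k 'I_q.+1) (e : vser q 'I_m.+1)
  : vser k 'I_m.+1 := fun i => wsum (c i) (psi e).

Definition phibar (m : nat) (g : vser m 'I_m.+1) (a : 'I_m.+1) (w : ser 'I_m.+1)
  : ser 'I_m.+1 :=
  match unlift ord0 a with None => lcat a w | Some i => lcat a (shuffle (g i) w) end.
Definition mcomp (l m : nat) (c : vser l 'I_m.+1) (g : vser m 'I_m.+1)
  : vser l 'I_m.+1 := fun i => wsum (c i) (phibar g).

Definition compinv (m : nat) (g : vser m 'I_m.+1) : vser m 'I_m.+1 :=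
  epsilon (inhabits (fun _ _ => 0)) (fun h => h = mcomp (vshinv g) h).

Definition dfb (q m : nat) (c : vser q 'I_m.+1) (d : vser m 'I_q.+1)
  : vser q 'I_m.+1 :=
  mcomp c (compinv (comp (vshinv d) c)).

End Series.

(* Main.v *)
Require Import Defs.
From HB Require Import structures.
From mathcomp Require Import all_boot all_order all_algebra.
From mathcomp Require Import reals.
From Stdlib Require Import FunctionalExtensionality ClassicalEpsilon.
Set Implicit Arguments. Unset Strict Implicit. Unset Printing Implicit Defensive.
Import Order.TTheory GRing.Theory Num.Theory.
Local Open Scope ring_scope.
Section Basic.
Variable R : realType.
Variable A : finType.
Local Notation ser := (ser R A).

Definition tsum k (f : seq A -> R) := \sum_(t : k.-tuple A) f t.

Lemma tsum0 f : tsum 0 f = f [::].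
Proof.
rewrite /tsum (big_pred1 [tuple]) // => t; apply/esym/eqP; exact: tuple0.
Qed.

Lemma tsumS k f : tsum k.+1 f = \sum_(a : A) tsum k (fun t => f (a :: t)).
Proof.
rewrite /tsum pair_big /=.
rewrite (reindex (fun p : A * k.-tuple A => [tuple of p.1 :: p.2])) //=.
exists (fun t : k.+1.-tuple A => (thead t, [tuple of behead t])) => [[a t] _|t _] /=.
  by rewrite theadE; congr pair; apply: val_inj.
by rewrite [in RHS](tuple_eta t).
Qed.

Lemma tsumD k f g : tsum k (fun t => f t + g t) = tsum k f + tsum k g.
Proof. by rewrite /tsum big_split. Qed.

Lemma tsum_eq k f g : (forall t, size t = k -> f t = g t) -> tsum k f = tsum k g.
Proof. by move=> H; apply: eq_bigr => t _; apply: H; rewrite size_tuple. Qed.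

Lemma tsumZ k c f : tsum k (fun t => c * f t) = c * tsum k f.
Proof. by rewrite /tsum mulr_sumr. Qed.

Lemma tsum1 k f : (forall t, f t = 0) -> tsum k f = 0.
Proof. by move=> H; rewrite /tsum big1. Qed.

Definition SS n (F : seq A -> seq A -> R) :=
  \sum_(k < n.+1) tsum k (fun u => tsum (n - k) (fun v => F u v)).

Lemma shuffleE (c d : ser) nu :
  shuffle c d nu = SS (size nu) (fun u v => c u * d v * (count_mem nu (shw u v))%:R).
Proof. by []. Qed.

End Basic.
Section Shw.
Variable R : realType.
Variable A : finType.
Local Notation ser := (ser R A).

Lemma shw_nil_r (u : seq A) : shw u [::] = [:: u].
Proof. by case: u. Qed.

Lemma shw_cons (u' v' : seq A) b b' : shw (b::u') (b'::v') =
  map (cons b) (shw u' (b'::v')) ++ map (cons b') (shw (b::u') v').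
Proof. by []. Qed.

Lemma count_map_cons (nu : seq A) a b L :
  count_mem (a::nu) (map (cons b) L) = ((b == a) * count_mem nu L)%N.
Proof.
elim: L => [|x L IH] /=; first by rewrite muln0.
rewrite IH eqseq_cons; case: (b == a) => //=; by rewrite !mul1n.
Qed.

Lemma count_shw a (nu u v : seq A) : count_mem (a::nu) (shw u v) =
  (if u is b::u' then (b==a) * count_mem nu (shw u' v) else 0)%N +
  (if v is b::v' then (b==a) * count_mem nu (shw u v') else 0)%N.
Proof.
case: u => [|b u'].
  case: v => [|b v'] //=; rewrite eqseq_cons; by case: (b == a); case: (v' == nu).
case: v => [|b' v'].
  rewrite /= ?shw_nil_r /= eqseq_cons; by case: (b == a); case: (u' == nu).
by rewrite shw_cons count_cat !count_map_cons.
Qed.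

Lemma sum_delta (a : A) (F : A -> R) :
  \sum_(b : A) (b == a)%:R * F b = F a.
Proof.
rewrite (bigD1 a) //= eqxx mul1r big1 ?addr0 // => b /negbTE ->; by rewrite mul0r.
Qed.

Lemma SS_consl n (a : A) (H : seq A -> seq A -> R) : SS n.+1 (fun u v => if u is b::u' then (b == a)%:R * H u' v else 0)
  = SS n H.
Proof.
rewrite /SS big_ord_recl /= tsum0 tsum1 // add0r.
apply: eq_bigr => i _; have ->: bump 0 i = i.+1 by []; rewrite tsumS subSS.
transitivity (\sum_(b : A) (b == a)%:R * tsum i (fun t => tsum (n - i) (fun v => H t v))).
  apply: eq_bigr => b _; rewrite -tsumZ; apply: eq_bigr => t _; by rewrite -tsumZ.
by rewrite sum_delta.
Qed.

Lemma SS_consr n (a : A) (H : seq A -> seq A -> R) : SS n.+1 (fun u v => if v is b::v' then (b == a)%:R * H u v' else 0)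
  = SS n H.
Proof.
rewrite /SS big_ord_recr /= subnn.
rewrite [X in _ + X]tsum1 ?addr0; last by move=> t; rewrite tsum0.
apply: eq_bigr => i _ /=; rewrite subSn; last by rewrite -ltnS.
apply: eq_bigr => u _; rewrite tsumS.
transitivity (\sum_(b : A) (b == a)%:R * tsum (n - i) (fun v => H u v)).
  apply: eq_bigr => b _; by rewrite -tsumZ.
by rewrite sum_delta.
Qed.

Lemma SSD n (F G : seq A -> seq A -> R) : SS n (fun u v => F u v + G u v) = SS n F + SS n G.
Proof.
rewrite /SS -big_split; apply: eq_bigr => k _; rewrite /tsum -big_split.
by apply: eq_bigr => u _; rewrite -big_split.
Qed.

Lemma SS_eq n (F G : seq A -> seq A -> R) : (forall u v, (size u + size v)%N = n -> F u v = G u v) -> SS n F = SS n G.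
Proof.
move=> H; apply: eq_bigr => k _; apply: tsum_eq => u su; apply: tsum_eq => v sv.
apply: H; rewrite su sv subnKC //; exact: (ltn_ord k).
Qed.

Definition dl (a : A) (s : ser) : ser := fun nu => s (a :: nu).

Lemma shuffle_nil (c d : ser) : shuffle c d [::] = c [::] * d [::].
Proof. by rewrite shuffleE /SS big_ord1 /= !tsum0 /= mulr1. Qed.

Lemma shuffle_cons (c d : ser) a nu :
  shuffle c d (a :: nu) = shuffle (dl a c) d nu + shuffle c (dl a d) nu.
Proof.
rewrite shuffleE /=.
rewrite (_ : shuffle (dl a c) d nu = SS (size nu).+1 (fun u v => if u is b::u' then
   (b==a)%:R * (dl a c u' * d v * (count_mem nu (shw u' v))%:R) else 0)); last by rewrite SS_consl.
rewrite (_ : shuffle c (dl a d) nu = SS (size nu).+1 (fun u v => if v is b::v' then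
   (b==a)%:R * (c u * dl a d v' * (count_mem nu (shw u v'))%:R) else 0)); last by rewrite SS_consr.
rewrite -SSD.
apply: SS_eq => u v _; rewrite count_shw natrD mulrDr.
congr (_ + _).
  case: u => [|b u]; first by rewrite mulr0.
  rewrite natrM /dl; case: eqP => [->|_]; by rewrite ?mul1r ?mul0r ?mulr0.
case: v => [|b v]; first by rewrite mulr0.
rewrite natrM /dl; case: eqP => [->|_]; by rewrite ?mul1r ?mul0r ?mulr0.
Qed.

End Shw.
Section ShAlg.
Variable R : realType.
Variable A : finType.
Local Notation ser := (ser R A).

Definition sadd (f g : ser) : ser := fun w => f w + g w.
Definition szero : ser := fun _ => 0.
Definition sscale (k : R) (f : ser) : ser := fun w => k * f w.
Definition ssum (I : finType) (F : I -> ser) : ser := fun w => \sum_(i : I) F i w.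

Lemma dl_shuffle a (c d : ser) : dl a (shuffle c d) = sadd (shuffle (dl a c) d) (shuffle c (dl a d)).
Proof. apply: functional_extensionality => nu; exact: shuffle_cons. Qed.

Lemma dl_one a : dl a (@Defs.one R A) = szero.
Proof. by apply: functional_extensionality. Qed.

Lemma shuffle_loc (c c' d d' : ser) nu :
  (forall w, (size w <= size nu)%N -> c w = c' w) ->
  (forall w, (size w <= size nu)%N -> d w = d' w) -> shuffle c d nu = shuffle c' d' nu.
Proof.
elim: nu c c' d d' => [|a nu IH] c c' d d' Hc Hd.
  by rewrite !shuffle_nil Hc ?Hd.
rewrite !shuffle_cons; congr (_ + _); apply: IH => w sw; rewrite /dl ?Hc ?Hd //=. all: exact: leqW.
Qed.

Lemma shuffle_sum_l (I : finType) (F : I -> ser) (e : ser) nu :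
  shuffle (ssum F) e nu = \sum_(i : I) shuffle (F i) e nu.
Proof.
elim: nu F e => [|a nu IH] F e.
  by rewrite shuffle_nil /ssum mulr_suml; apply: eq_bigr => i _; rewrite shuffle_nil.
rewrite shuffle_cons (IH (fun i => dl a (F i))) IH -big_split.
by apply: eq_bigr => i _; rewrite shuffle_cons.
Qed.

Lemma shuffleC (c d : ser) : shuffle c d = shuffle d c.
Proof.
apply: functional_extensionality => nu.
elim: nu c d => [|a nu IH] c d; first by rewrite !shuffle_nil mulrC.
by rewrite !shuffle_cons [shuffle (dl a c) d nu]IH [shuffle c (dl a d) nu]IH addrC.
Qed.

Lemma shuffle_sum_r (I : finType) (F : I -> ser) (e : ser) nu :
  shuffle e (ssum F) nu = \sum_(i : I) shuffle e (F i) nu.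
Proof.
rewrite shuffleC shuffle_sum_l; apply: eq_bigr => i _; by rewrite shuffleC.
Qed.

Lemma shuffleDl (f g e : ser) nu : shuffle (sadd f g) e nu = shuffle f e nu + shuffle g e nu.
Proof.
have -> : sadd f g = ssum (fun b : bool => if b then f else g).
  by apply: functional_extensionality => w; rewrite /ssum big_bool.
by rewrite shuffle_sum_l big_bool.
Qed.

Lemma shuffleDr (f g e : ser) nu : shuffle e (sadd f g) nu = shuffle e f nu + shuffle e g nu.
Proof. by rewrite shuffleC shuffleDl !(shuffleC e). Qed.

Lemma shuffleZl k (f e : ser) nu : shuffle (sscale k f) e nu = k * shuffle f e nu.
Proof.
elim: nu f e => [|a nu IH] f e; first by rewrite !shuffle_nil /sscale mulrA.
rewrite !shuffle_cons mulrDr -IH -IH; congr (_ + _).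
Qed.

Lemma shuffleZr k (f e : ser) nu : shuffle e (sscale k f) nu = k * shuffle e f nu.
Proof. by rewrite shuffleC shuffleZl shuffleC. Qed.

Lemma shuffle0l (e : ser) : shuffle szero e = szero.
Proof.
apply: functional_extensionality => nu.
have E : szero = sscale 0 szero by apply: functional_extensionality => w; rewrite /sscale mul0r.
by rewrite {1}E shuffleZl mul0r.
Qed.

Lemma shuffle0r (e : ser) : shuffle e szero = szero.
Proof. by rewrite shuffleC shuffle0l. Qed.

Lemma shuffle1l (e : ser) : shuffle (@Defs.one R A) e = e.
Proof.
apply: functional_extensionality => nu.
elim: nu e => [|a nu IH] e; first by rewrite shuffle_nil mul1r.
by rewrite shuffle_cons dl_one shuffle0l IH add0r.
Qed.

Lemma shuffle1r (e : ser) : shuffle e (@Defs.one R A) = e.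
Proof. by rewrite shuffleC shuffle1l. Qed.

Lemma shuffleA (c d e : ser) : shuffle (shuffle c d) e = shuffle c (shuffle d e).
Proof.
apply: functional_extensionality => nu.
elim: nu c d e => [|a nu IH] c d e; first by rewrite !shuffle_nil mulrA.
rewrite !shuffle_cons dl_shuffle shuffleDl dl_shuffle shuffleDr !IH.
by rewrite addrA.
Qed.

End ShAlg.
Section Fix.
Variable R : realType.
Variables (I B : Type).
Local Notation V := (I -> seq B -> R).

Definition agr n (f g : V) := forall i w, (size w < n)%N -> f i w = g i w.

Variable T : V -> V.
Hypothesis contr : forall n f g, agr n f g -> agr n.+1 (T f) (T g).

Lemma fix_uniq f g : f = T f -> g = T g -> f = g.
Proof.
move=> Hf Hg.
have H : forall n, agr n f g.
  elim=> [|n IH] i w sw //; rewrite Hf Hg; exact: (contr IH).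
apply: functional_extensionality => i; apply: functional_extensionality => w.
by apply: (H (size w).+1).
Qed.

Definition fit k : V := iter k T (fun _ _ => 0).

Lemma fit_agr k j : agr k (fit k) (fit (k + j)).
Proof.
elim: k => [|k IH] i w sw //.
rewrite addSn /=; exact: (contr IH).
Qed.

Lemma fix_ex : exists f, f = T f.
Proof.
pose f : V := fun i w => fit (size w).+1 i w.
have Hf : forall k, agr k.+1 f (fit k.+1).
  move=> k i w sw; rewrite /f.
  have := @fit_agr (size w).+1 (k - size w)%N i w (ltnSn _).
  by rewrite addSn subnKC // -ltnS.
exists f; apply: functional_extensionality => i; apply: functional_extensionality => w.
rewrite (contr (Hf (size w)) i (leqnSn _)).
change (f i w = fit (size w).+2 i w); rewrite /f.
have := @fit_agr (size w).+1 1 i w (ltnSn _); by rewrite addn1.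
Qed.

End Fix.
Section ShInv.
Variable R : realType.
Variable A : finType.
Local Notation ser := (ser R A).
Local Notation one1 := (@Defs.one R A).

Lemma shinv_ex (d : ser) : d [::] != 0 -> exists e, shuffle d e = one1.
Proof.
move=> d0.
pose T (F : unit -> seq A -> R) : unit -> seq A -> R := fun _ w =>
  match w with [::] => (d [::])^-1 | a :: nu => - shuffle (dl a d) (shuffle (F tt) (F tt)) nu end.
have contr : forall n F G, agr n F G -> agr n.+1 (T F) (T G).
  move=> n F G H i [|a nu] sw //=; congr (- _); apply: shuffle_loc => // v sv.
  apply: shuffle_loc => u su; apply: H; exact: leq_ltn_trans su (leq_ltn_trans sv sw).
have [F HF] := fix_ex contr.
set e := F tt.
have He : forall a, dl a e = sscale (-1) (shuffle (dl a d) (shuffle e e)).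
  move=> a; apply: functional_extensionality => v; rewrite /dl /e {1}HF /sscale /=.
  by rewrite mulN1r.
exists e.
have H : forall n w, (size w < n)%N -> shuffle d e w = one1 w.
  elim=> [|n IH] [|a nu] //= sw.
    by rewrite shuffle_nil /e HF /= mulfV.
  rewrite shuffle_cons He shuffleZr.
  have -> : shuffle d (shuffle (dl a d) (shuffle e e)) = shuffle (shuffle d e) (shuffle (dl a d) e).
    by rewrite shuffleA -(shuffleA e) (shuffleC e (dl a d)) shuffleA.
  rewrite (@shuffle_loc _ _ (shuffle d e) one1 (shuffle (dl a d) e) (shuffle (dl a d) e) nu) //; last first.
    move=> w sw'; apply: IH; exact: leq_ltn_trans sw' sw.
  by rewrite shuffle1l mulN1r addrN.
apply: functional_extensionality => w; exact: (H (size w).+1).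
Qed.

Lemma shinv_spec (d : ser) : d [::] != 0 -> shuffle d (shinv d) = one1.
Proof.
move=> d0; rewrite /shinv; apply: (epsilon_spec (inhabits (fun _ => 0)) (fun e => shuffle d e = one1)).
exact: shinv_ex.
Qed.

Lemma inv_uniq (d e e' : ser) : shuffle d e = one1 -> shuffle d e' = one1 -> e = e'.
Proof.
move=> H H'.
by rewrite -(shuffle1l e) -H' (shuffleC d e') shuffleA H shuffle1r.
Qed.

Lemma shinv_uniq (d e : ser) : shuffle d e = one1 -> shinv d = e.
Proof.
move=> H; apply: (inv_uniq (d := d)) => //.
rewrite /shinv; apply: (epsilon_spec (inhabits (fun _ => 0)) (fun e => shuffle d e = one1)).
by exists e.
Qed.

Lemma shinv_nil (d : ser) : d [::] != 0 -> shinv d [::] = (d [::])^-1.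
Proof.
move=> d0; have := f_equal (fun s => s [::]) (shinv_spec d0).
rewrite /= shuffle_nil => H.
by apply: (mulfI d0); rewrite H mulfV.
Qed.

End ShInv.
Section Wsum.
Variable R : realType.
Variables A B : finType.
Variable l : A -> B.
Variable K : A -> ser R B.
Variable Phi : A -> ser R B -> ser R B.
Hypothesis H0 : forall b w, Phi b w [::] = 0.
Hypothesis H1 : forall b w a nu, Phi b w (a :: nu) = (l b == a)%:R * shuffle (K b) w nu.

Local Notation F eta := (foldr Phi (@Defs.one R B) eta).

Lemma fold_vanish (eta : seq A) (v : seq B) : (size v < size eta)%N -> F eta v = 0.
Proof.
elim: eta v => [|b eta IH] [|a v] sv //=.
rewrite H1 (@shuffle_loc _ _ (K b) (K b) _ (@szero R B)) // ?shuffle0r ?mulr0 //.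
move=> w sw; apply: IH; exact: leq_ltn_trans sw sv.
Qed.

Lemma wsum_ext (c : ser R A) (v : seq B) N : (size v < N)%N ->
  wsum c Phi v = \sum_(k < N) tsum k (fun eta => c eta * F eta v).
Proof.
move=> sN; rewrite /wsum.
rewrite (big_ord_widen N (fun k => tsum k (fun eta => c eta * F eta v))) //.
rewrite [RHS](bigID (fun i : 'I_N => (i < (size v).+1)%N)) /=.
rewrite [X in _ = _ + X]big1 ?addr0 // => i; rewrite -leqNgt => Hi.
rewrite (@tsum_eq _ _ i _ (fun _ => 0)); first by apply: tsum1.
move=> t st; by rewrite fold_vanish ?mulr0 // st.
Qed.

Lemma wsum_nil (c : ser R A) : wsum c Phi [::] = c [::].
Proof.
transitivity (tsum 0 (fun eta => c eta * F eta [::])); first by rewrite /wsum big_ord1.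
by rewrite tsum0 /= mulr1.
Qed.

Lemma wsum_cons (c : ser R A) a nu : wsum c Phi (a :: nu) =
  \sum_(b : A) (l b == a)%:R * shuffle (K b) (wsum (dl b c) Phi) nu.
Proof.
have -> : wsum c Phi (a :: nu) = \sum_(k < (size nu).+2) tsum k (fun eta => c eta * F eta (a::nu)) by [].
rewrite big_ord_recl tsum0 /= mulr0 add0r.
pose G b : ser R B := fun v => \sum_(i < (size nu).+1) tsum i (fun t => c (b :: t) * F t v).
have EG : forall b, shuffle (K b) (wsum (dl b c) Phi) nu = shuffle (K b) (G b) nu.
  move=> b; apply: shuffle_loc => // w sw; rewrite /G (wsum_ext _ (N := (size nu).+1)) //.
have EG2 : forall b, shuffle (K b) (G b) nu =
    \sum_(i < (size nu).+1) tsum i (fun t => c (b :: t) * shuffle (K b) (F t) nu).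
  move=> b.
  have -> : G b = ssum (fun i : 'I_(size nu).+1 =>
               ssum (fun t : i.-tuple A => sscale (c (b :: t)) (F t))) by [].
  rewrite shuffle_sum_r; apply: eq_bigr => i _; rewrite shuffle_sum_r.
  by apply: eq_bigr => t _; rewrite shuffleZr.
under [RHS]eq_bigr => b _ do rewrite EG EG2 mulr_sumr.
rewrite exchange_big /=; apply: eq_bigr => i _.
have ->: bump 0 i = i.+1 by [].
rewrite tsumS; apply: eq_bigr => b _; rewrite /tsum mulr_sumr; apply: eq_bigr => t _ /=.
by rewrite H1 mulrCA.
Qed.

End Wsum.
Section WsumLin.
Variable R : realType.
Variables A B : finType.
Variable Phi : A -> ser R B -> ser R B.

Lemma wsum_add (s t : ser R A) : wsum (sadd s t) Phi = sadd (wsum s Phi) (wsum t Phi).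
Proof.
apply: functional_extensionality => nu.
rewrite /wsum /sadd -big_split; apply: eq_bigr => k _; rewrite -big_split.
by apply: eq_bigr => eta _; rewrite mulrDl.
Qed.

Lemma wsum_ssum (I : finType) (F : I -> ser R A) :
  wsum (ssum F) Phi = ssum (fun i => wsum (F i) Phi).
Proof.
apply: functional_extensionality => nu.
rewrite /wsum /ssum exchange_big; apply: eq_bigr => k _.
rewrite exchange_big; apply: eq_bigr => eta _; by rewrite mulr_suml.
Qed.

Lemma wsum_zero : wsum (@szero R A) Phi = @szero R B.
Proof.
apply: functional_extensionality => nu.
by rewrite /wsum big1 // => k _; rewrite /tsum big1 // => eta _; rewrite /szero mul0r.
Qed.

End WsumLin.

Section WsumHom.
Variable R : realType.
Variables A B : finType.
Variable l : A -> B.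
Variable K : A -> ser R B.
Variable Phi : A -> ser R B -> ser R B.
Hypothesis H0 : forall b w, Phi b w [::] = 0.
Hypothesis H1 : forall b w a nu, Phi b w (a :: nu) = (l b == a)%:R * shuffle (K b) w nu.
Local Notation W s := (wsum s Phi).

Lemma dl_wsum (s : ser R A) a : dl a (W s) =
  ssum (fun b => sscale (l b == a)%:R (shuffle (K b) (W (dl b s)))).
Proof.
apply: functional_extensionality => nu; by rewrite /dl (wsum_cons H0 H1).
Qed.

Lemma wsum_one : W (@Defs.one R A) = @Defs.one R B.
Proof.
apply: functional_extensionality => [[|a nu]]; first by rewrite wsum_nil.
rewrite (wsum_cons H0 H1) big1 // => b _.
by rewrite dl_one wsum_zero shuffle0r /szero mulr0.
Qed.

Lemma wsum_shuffle (s t : ser R A) : W (shuffle s t) = shuffle (W s) (W t).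
Proof.
have H : forall n s t w, (size w < n)%N -> W (shuffle s t) w = shuffle (W s) (W t) w.
  elim=> [|n IH] s' t' [|a nu] //= sw.
    by rewrite wsum_nil !shuffle_nil !wsum_nil.
  rewrite (wsum_cons H0 H1) shuffle_cons !dl_wsum shuffle_sum_l shuffle_sum_r -big_split.
  apply: eq_bigr => b _ /=.
  rewrite shuffleZl shuffleZr -mulrDr; congr (_ * _).
  rewrite dl_shuffle wsum_add shuffleDr; congr (_ + _).
    rewrite shuffleA; apply: shuffle_loc => // w sw'; apply: IH.
    exact: leq_ltn_trans sw' sw.
  rewrite -shuffleA (shuffleC (W s') (K b)) shuffleA.
  apply: shuffle_loc => // w sw'; apply: IH; exact: leq_ltn_trans sw' sw.
apply: functional_extensionality => w; exact: (H (size w).+1).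
Qed.

End WsumHom.
Section Spec.
Variable R : realType.

Definition Kv (n : nat) (B : finType) (g : vser R n B) (a : 'I_n.+1) : ser R B :=
  match unlift ord0 a with None => @Defs.one R B | Some i => g i end.

Lemma phibar_H0 m (g : vser R m 'I_m.+1) b w : phibar g b w [::] = 0.
Proof. by rewrite /phibar; case: (unlift ord0 b). Qed.

Lemma phibar_H1 m (g : vser R m 'I_m.+1) b w a nu :
  phibar g b w (a :: nu) = (b == a)%:R * shuffle (Kv g b) w nu.
Proof.
rewrite /phibar /Kv; case: (unlift ord0 b) => [i|] /=; rewrite /lcat eq_sym;
  case: eqP => _; rewrite ?mul1r ?mul0r ?shuffle1l //.
Qed.

Lemma psi_H0 q m (e : vser R q 'I_m.+1) b w : psi e b w [::] = 0.
Proof. by []. Qed.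

Lemma psi_H1 q m (e : vser R q 'I_m.+1) b w a nu :
  psi e b w (a :: nu) = (ord0 == a)%:R * shuffle (Kv e b) w nu.
Proof.
rewrite /psi /Kv /lcat eq_sym; case: eqP => _; rewrite ?mul1r ?mul0r //;
by case: (unlift ord0 b).
Qed.

Definition MC m (g : vser R m 'I_m.+1) (s : ser R 'I_m.+1) := wsum s (phibar g).
Definition CP q m (e : vser R q 'I_m.+1) (s : ser R 'I_q.+1) := wsum s (psi e).

Section MCl.
Variable m : nat.
Implicit Types g h : vser R m 'I_m.+1.
Implicit Types s : ser R 'I_m.+1.

Lemma MC_nil g s : MC g s [::] = s [::].
Proof. exact: wsum_nil. Qed.

Lemma MC_cons g s a nu : MC g s (a :: nu) = shuffle (Kv g a) (MC g (dl a s)) nu.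
Proof. by rewrite /MC (wsum_cons (@phibar_H0 m g) (@phibar_H1 m g)) sum_delta. Qed.

Lemma dl_MC g s a : dl a (MC g s) = shuffle (Kv g a) (MC g (dl a s)).
Proof. apply: functional_extensionality => nu; exact: MC_cons. Qed.

Lemma MC_shuffle g s t : MC g (shuffle s t) = shuffle (MC g s) (MC g t).
Proof. exact: (wsum_shuffle (@phibar_H0 m g) (@phibar_H1 m g)). Qed.

Lemma MC_one g : MC g (@Defs.one R _) = @Defs.one R _.
Proof. exact: (wsum_one (@phibar_H0 m g) (@phibar_H1 m g)). Qed.

Lemma MC_vone s : MC (@vone R m _) s = s.
Proof.
have H : forall n s w, (size w < n)%N -> MC (@vone R m _) s w = s w.
  elim=> [|n IH] s' [|a nu] //= sw; first by rewrite MC_nil.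
  rewrite MC_cons (_ : Kv _ a = @Defs.one R _); last by rewrite /Kv; case: unlift.
  by rewrite shuffle1l IH.
apply: functional_extensionality => w; exact: (H (size w).+1).
Qed.

Lemma Kv_MC2 (a b : vser R m 'I_m.+1) x :
  Kv (fun i => shuffle (MC b (a i)) (b i)) x = shuffle (MC b (Kv a x)) (Kv b x).
Proof. by rewrite /Kv; case: unlift => // ; rewrite MC_one shuffle1l. Qed.

Lemma MC_MC (a b : vser R m 'I_m.+1) s :
  MC b (MC a s) = MC (fun i => shuffle (MC b (a i)) (b i)) s.
Proof.
set a2 := (fun i => _).
have H : forall n s w, (size w < n)%N -> MC b (MC a s) w = MC a2 s w.
  elim=> [|n IH] s' [|x nu] //= sw; first by rewrite !MC_nil.
  rewrite !MC_cons dl_MC MC_shuffle Kv_MC2.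
  rewrite (shuffleC (MC b (Kv a x)) (Kv b x)) shuffleA.
  apply: shuffle_loc => // w sw'; apply: shuffle_loc => // u su; apply: IH.
  exact: leq_ltn_trans su (leq_ltn_trans sw' sw).
apply: functional_extensionality => w; exact: (H (size w).+1).
Qed.

Lemma MC_loc n g g' : agr n g g' -> forall s w, (size w <= n)%N -> MC g s w = MC g' s w.
Proof.
move=> Hg.
have H : forall k s w, (size w <= k)%N -> (size w <= n)%N -> MC g s w = MC g' s w.
  elim=> [|k IH] s [|x nu] //= sk sn; rewrite ?MC_nil //.
  rewrite !MC_cons; apply: shuffle_loc => u su.
    rewrite /Kv; case: unlift => // i; apply: Hg; exact: leq_ltn_trans su sn.
  apply: IH; [exact: leq_trans su sk | exact: leq_trans su (ltnW sn)].
move=> s w; exact: H (leqnn _).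
Qed.

End MCl.

Section CPl.
Variables q m : nat.
Implicit Types e : vser R q 'I_m.+1.
Implicit Types s : ser R 'I_q.+1.

Lemma CP_nil e s : CP e s [::] = s [::].
Proof. exact: wsum_nil. Qed.

Lemma CP_cons e s a nu : CP e s (a :: nu) =
  (ord0 == a)%:R * \sum_(b : 'I_q.+1) shuffle (Kv e b) (CP e (dl b s)) nu.
Proof. by rewrite /CP (wsum_cons (@psi_H0 q m e) (@psi_H1 q m e)) mulr_sumr. Qed.

Lemma CP_shuffle e s t : CP e (shuffle s t) = shuffle (CP e s) (CP e t).
Proof. exact: (wsum_shuffle (@psi_H0 q m e) (@psi_H1 q m e)). Qed.

Lemma CP_one e : CP e (@Defs.one R _) = @Defs.one R _.
Proof. exact: (wsum_one (@psi_H0 q m e) (@psi_H1 q m e)). Qed.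

Lemma CP_loc n e e' : agr n e e' -> forall s w, (size w <= n)%N -> CP e s w = CP e' s w.
Proof.
move=> He.
have H : forall k s w, (size w <= k)%N -> (size w <= n)%N -> CP e s w = CP e' s w.
  elim=> [|k IH] s [|x nu] //= sk sn; rewrite ?CP_nil //.
  rewrite !CP_cons; congr (_ * _); apply: eq_bigr => b _; apply: shuffle_loc => u su.
    rewrite /Kv; case: unlift => // i; apply: He; exact: leq_ltn_trans su sn.
  apply: IH; [exact: leq_trans su sk | exact: leq_trans su (ltnW sn)].
move=> s w; exact: H (leqnn _).
Qed.

Lemma MC_CP (h : vser R m 'I_m.+1) e s :
  MC h (CP e s) = CP (fun i => MC h (e i)) s.
Proof.
set e2 := (fun i => _).
have H : forall n s w, (size w < n)%N -> MC h (CP e s) w = CP e2 s w.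
  elim=> [|n IH] s' [|x nu] //= sw; first by rewrite MC_nil !CP_nil.
  rewrite MC_cons CP_cons.
  case: (eqVneq ord0 x) => [<-|nx].
    have -> : Kv h ord0 = @Defs.one R _ by rewrite /Kv unlift_none.
    rewrite shuffle1l mul1r.
    have -> : dl ord0 (CP e s') =
       ssum (fun b => shuffle (Kv e b) (CP e (dl b s'))).
      by apply: functional_extensionality => v; rewrite /dl CP_cons eqxx mul1r.
    rewrite /MC wsum_ssum /ssum; apply: eq_bigr => b _.
    rewrite (_ : wsum _ (phibar h) = MC h (shuffle (Kv e b) (CP e (dl b s')))) //.
    rewrite MC_shuffle.
    have -> : MC h (Kv e b) = Kv e2 b by rewrite /Kv; case: unlift => //; rewrite MC_one.
    apply: shuffle_loc => // u su; apply: IH; exact: leq_ltn_trans su sw.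
  have -> : dl x (CP e s') = @szero R _.
    by apply: functional_extensionality => v; rewrite /dl CP_cons (negbTE nx) mul0r.
  by rewrite /MC wsum_zero shuffle0r /szero mul0r.
apply: functional_extensionality => w; exact: (H (size w).+1).
Qed.

End CPl.
End Spec.
Section Main.
Variable R : realType.
Variables m q : nat.
Local Notation X := 'I_m.+1.
Local Notation X' := 'I_q.+1.

Lemma compinv_fix (g : vser R m X) : compinv g = mcomp (vshinv g) (compinv g).
Proof.
rewrite /compinv; apply: (epsilon_spec (inhabits (fun _ _ => 0)) (fun h => h = mcomp (vshinv g) h)).
apply: fix_ex => n h h' H i w sw.
exact: (MC_loc H).
Qed.

Lemma char_uniq (c : vser R q X) (d : vser R m X') (f1 f2 : vser R q X) :
  f1 = mcomp c (Defs.comp d f1) -> f2 = mcomp c (Defs.comp d f2) -> f1 = f2.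
Proof.
move=> E1 E2.
have contr : forall n (f f' : vser R q X), agr n f f' ->
    agr n.+1 (mcomp c (Defs.comp d f)) (mcomp c (Defs.comp d f')).
  move=> n f f' H i w sw.
  apply: (MC_loc (n := n)) => // j u su.
  apply: (CP_loc H); exact: ltnW.
exact: (fix_uniq contr E1 E2).
Qed.

Lemma dfb_char (c : vser R q X) (d : vser R m X') : purely_improper d ->
  dfb c d = mcomp c (Defs.comp d (dfb c d)).
Proof.
move=> Hd.
set g := Defs.comp (vshinv d) c.
set h := compinv g.
have hfix : h = mcomp (vshinv g) h by exact: compinv_fix.
have -> : dfb c d = mcomp c h by [].
congr (mcomp c _); apply: functional_extensionality => i.
rewrite {1}hfix.
change (MC h (shinv (g i)) = CP (fun j => MC h (c j)) (d i)).
rewrite -MC_CP; congr (MC h _); apply: shinv_uniq.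
change (shuffle (CP c (shinv (d i))) (CP c (d i)) = @Defs.one R _).
by rewrite -CP_shuffle shuffleC shinv_spec ?CP_one.
Qed.

Lemma step (c : vser R q X) (d1 d2 : vser R m X') e1 f :
  e1 = mcomp c (Defs.comp d1 e1) -> f = mcomp e1 (Defs.comp d2 f) ->
  f = mcomp c (Defs.comp (vshuffle d1 d2) f).
Proof.
move=> He1 Hf.
apply: functional_extensionality => i.
rewrite {1}Hf.
change (MC (Defs.comp d2 f) (e1 i) = MC (Defs.comp (vshuffle d1 d2) f) (c i)).
rewrite {1}He1.
change (MC (Defs.comp d2 f) (MC (Defs.comp d1 e1) (c i)) = MC (Defs.comp (vshuffle d1 d2) f) (c i)).
rewrite MC_MC; congr (MC _ (c i)); apply: functional_extensionality => j.
change (shuffle (MC (Defs.comp d2 f) (CP e1 (d1 j))) (CP f (d2 j)) = CP f (shuffle (d1 j) (d2 j))).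
rewrite MC_CP CP_shuffle; congr (shuffle (CP _ _) _).
exact: (esym Hf).
Qed.

End Main.

Theorem theorem16 (R : realType) (m q : nat) :
  (forall c : vser R q 'I_m.+1, dfb c (@vone R m 'I_q.+1) = c) /\
  (forall (c : vser R q 'I_m.+1) (d1 d2 : vser R m 'I_q.+1),
     purely_improper d1 -> purely_improper d2 ->
     dfb (dfb c d1) d2 = dfb c (vshuffle d1 d2)).
Proof.
split.
  move=> c.
  have Hv : purely_improper (@vone R m 'I_q.+1) by move=> i; rewrite /vone /= oner_neq0.
  apply: (char_uniq (dfb_char c Hv)).
  have -> : Defs.comp (@vone R m 'I_q.+1) c = @vone R m 'I_m.+1.
    apply: functional_extensionality => i; exact: CP_one.
  apply: functional_extensionality => i; symmetry; exact: MC_vone.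
move=> c d1 d2 H1 H2.
have H12 : purely_improper (vshuffle d1 d2).
  by move=> i; rewrite /vshuffle shuffle_nil mulf_neq0.
apply: (char_uniq _ (dfb_char c H12)).
apply: (step (dfb_char c H1)).
exact: dfb_char.
Qed.
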